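(* Let $X\in\mathbb{R}^{N\times d}$, and let $(W_a,A_a)$, $(W_b,A_b)\in\mathbb{R}^{d\times m}\times\mathbb{R}^{m\times m}$. Let $\lambda_1:=\max\{\|W_a\|,\|W_b\|\}$, $\lambda_2:=\max\{\|A_a\|,\|A_b\|\}$ (assume $\lambda_2>0$), and choose $\gamma>0$ with $\gamma_0:=\gamma\lambda_2<1$. Then for $i\in\{a,b\}$ the equation $Z_i=\sigma(\gamma Z_iA_i+\sigma(XW_i))$ has a unique solution $Z_i\in\mathbb{R}^{N\times m}$, and $$\|Z_a-Z_b\|\le\frac{\|X\|_F}{1-\gamma_0}\left[\frac{\gamma_0}{1-\gamma_0}\frac{\lambda_1}{\lambda_2}\|A_a-A_b\|+\|W_a-W_b\|\right].$$
   Context: $\sigma(u)=\max\{0,u\}$ applied entrywise. $\|\cdot\|$ is the spectral norm and $\|\cdot\|_F$ the Frobenius norm. *)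

(* Defs.v *)
From HB Require Import structures.
From mathcomp Require Import all_boot all_order all_algebra.
From mathcomp Require Import classical_sets reals.
Set Implicit Arguments. Unset Strict Implicit. Unset Printing Implicit Defensive.
Import Order.TTheory GRing.Theory Num.Theory.
Local Open Scope ring_scope.
Local Open Scope classical_set_scope.

Definition relu {R : realType} (u : R) : R := Num.max 0 u.
Definition relu_mx {R : realType} (p q : nat) (M : 'M[R]_(p, q)) : 'M[R]_(p, q) :=
  map_mx relu M.

Definition vnorm2 {R : realType} (q : nat) (x : 'cV[R]_q) : R :=
  Num.sqrt (\sum_(i < q) x i 0 ^+ 2).

Definition specnorm {R : realType} (p q : nat) (A : 'M[R]_(p, q)) : R :=
  sup [set r : R | exists x : 'cV[R]_q, vnorm2 x <= 1 /\ r = vnorm2 (A *m x)].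

Definition frobnorm {R : realType} (p q : nat) (A : 'M[R]_(p, q)) : R :=
  Num.sqrt (\sum_(i < p) \sum_(j < q) A i j ^+ 2).

Definition is_eq_sol {R : realType} (N d m : nat) (gamma : R)
    (X : 'M[R]_(N, d)) (W : 'M[R]_(d, m)) (A : 'M[R]_m) (Z : 'M[R]_(N, m)) : Prop :=
  Z = relu_mx (gamma *: (Z *m A) + relu_mx (X *m W)).

(* Main.v *)
Require Import Defs.
From HB Require Import structures.
From mathcomp Require Import all_boot all_order all_algebra.
From mathcomp Require Import classical_sets reals.
From mathcomp Require Import all_classical all_reals all_analysis.
From mathcomp Require Import ring lra.
Set Implicit Arguments. Unset Strict Implicit. Unset Printing Implicit Defensive.
Import Order.TTheory GRing.Theory Num.Theory.
Local Open Scope ring_scope.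

Section CS.
Variable R : realType.

Lemma cs_sq (I : finType) (a b : I -> R) :
  (\sum_i a i * b i) ^+ 2 <= (\sum_i a i ^+ 2) * (\sum_i b i ^+ 2).
Proof.
set A := \sum_i a i ^+ 2; set B := \sum_i b i ^+ 2; set C := \sum_i a i * b i.
have B0 : 0 <= B by apply: sumr_ge0 => i _; exact: sqr_ge0.
have key : 0 <= B * (A * B - C ^+ 2).
  have -> : B * (A * B - C ^+ 2) = \sum_i (B * a i - C * b i) ^+ 2.
    have E : forall i, (B * a i - C * b i) ^+ 2 =
      B ^+ 2 * a i ^+ 2 - (2 * B * C) * (a i * b i) + C ^+ 2 * b i ^+ 2.
      by move=> i; ring.
    rewrite (eq_bigr _ (fun i _ => E i)) big_split /= sumrB -!mulr_sumr.
    rewrite -/A -/B -/C; ring.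
  by apply: sumr_ge0 => i _; exact: sqr_ge0.
have [Bp|] := ltrP 0 B.
  by rewrite -subr_ge0; move: key; rewrite pmulr_rge0.
move=> Ble; have B00 : B = 0 by apply/eqP; rewrite eq_le Ble B0.
have bz : forall i, b i = 0.
  move=> i; apply/eqP; rewrite -sqrf_eq0.
  move/eqP: B00; rewrite psumr_eq0 => [/allP H|j _]; last exact: sqr_ge0.
  by apply: (implyP (H i (mem_index_enum i))).
have -> : C = 0 by rewrite /C big1 // => i _; rewrite bz mulr0.
by rewrite B00 mulr0 expr0n.
Qed.

Definition nrm (I : finType) (a : I -> R) := Num.sqrt (\sum_i a i ^+ 2).

Lemma nrm_ge0 (I : finType) (a : I -> R) : 0 <= nrm a.
Proof. exact: sqrtr_ge0. Qed.

Lemma sum_sq_ge0 (I : finType) (a : I -> R) : 0 <= \sum_i a i ^+ 2.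
Proof. by apply: sumr_ge0 => i _; exact: sqr_ge0. Qed.

Lemma nrm_sq (I : finType) (a : I -> R) : nrm a ^+ 2 = \sum_i a i ^+ 2.
Proof. by rewrite sqr_sqrtr // sum_sq_ge0. Qed.

Lemma cs (I : finType) (a b : I -> R) : \sum_i a i * b i <= nrm a * nrm b.
Proof.
apply: (le_trans (ler_norm _)).
rewrite -sqrtr_sqr -sqrtrM ?sum_sq_ge0 // ler_sqrt; last first.
  by apply: mulr_ge0; exact: sum_sq_ge0.
exact: cs_sq.
Qed.

Lemma nrm_le (I : finType) (a b : I -> R) :
  (forall i, a i ^+ 2 <= b i ^+ 2) -> nrm a <= nrm b.
Proof.
move=> H; rewrite /nrm ler_sqrt ?sum_sq_ge0 //.
by apply: ler_sum => i _; exact: H.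
Qed.

Lemma nrm_entry (I : finType) (a : I -> R) i : `|a i| <= nrm a.
Proof.
rewrite -sqrtr_sqr /nrm ler_sqrt ?sum_sq_ge0 //.
rewrite (bigD1 i) //= lerDl; apply: sumr_ge0 => j _; exact: sqr_ge0.
Qed.

Lemma nrmZ (I : finType) (c : R) (a : I -> R) :
  nrm (fun i => c * a i) = `|c| * nrm a.
Proof.
rewrite /nrm -sqrtr_sqr -sqrtrM ?sqr_ge0 // mulr_sumr.
by congr Num.sqrt; apply: eq_bigr => i _; rewrite exprMn.
Qed.

Lemma nrmD (I : finType) (a b : I -> R) :
  nrm (fun i => a i + b i) <= nrm a + nrm b.
Proof.
rewrite -(ler_pXn2r (_ : 0 < 2)%N) ?nnegrE ?addr_ge0 ?nrm_ge0 //.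
rewrite nrm_sq sqrrD !nrm_sq.
have -> : \sum_i (a i + b i) ^+ 2 =
  \sum_i a i ^+ 2 + (\sum_i a i * b i) *+ 2 + \sum_i b i ^+ 2.
  rewrite -sumrMnl -!big_split /=; apply: eq_bigr => i _; ring.
by rewrite lerD2r lerD2l lerMn2r /= cs.
Qed.

Lemma nrm_eq0 (I : finType) (a : I -> R) : nrm a = 0 -> forall i, a i = 0.
Proof.
move=> H i; apply/eqP; rewrite -normr_le0 -H; exact: nrm_entry.
Qed.

End CS.

Section Frob.
Variable R : realType.
Implicit Types p q : nat.

Lemma frobE p q (A : 'M[R]_(p, q)) : frobnorm A = nrm (fun x => A x.1 x.2).
Proof. by rewrite /frobnorm /nrm pair_bigA. Qed.

Lemma frob_sq p q (A : 'M[R]_(p, q)) :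
  frobnorm A ^+ 2 = \sum_i \sum_j A i j ^+ 2.
Proof. by rewrite /frobnorm sqr_sqrtr // sumr_ge0 // => i _; rewrite sum_sq_ge0. Qed.

Lemma frob_ge0 p q (A : 'M[R]_(p, q)) : 0 <= frobnorm A.
Proof. exact: sqrtr_ge0. Qed.

Lemma frob_entry p q (A : 'M[R]_(p, q)) i j : `|A i j| <= frobnorm A.
Proof. by rewrite frobE; exact: (nrm_entry (fun x => A x.1 x.2) (i, j)). Qed.

Lemma frob_le p q (A B : 'M[R]_(p, q)) :
  (forall i j, A i j ^+ 2 <= B i j ^+ 2) -> frobnorm A <= frobnorm B.
Proof. by move=> H; rewrite !frobE; apply: nrm_le => -[i j]; exact: H. Qed.

Lemma frobZ p q c (A : 'M[R]_(p, q)) : frobnorm (c *: A) = `|c| * frobnorm A.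
Proof.
rewrite !frobE -nrmZ; by apply: congr1; apply: boolp.funext => x; rewrite mxE.
Qed.

Lemma frobD p q (A B : 'M[R]_(p, q)) :
  frobnorm (A + B) <= frobnorm A + frobnorm B.
Proof.
rewrite !frobE; apply: le_trans (nrmD _ _); apply: nrm_le => x.
by rewrite mxE.
Qed.

Lemma frob_eq0 p q (A : 'M[R]_(p, q)) : frobnorm A = 0 -> A = 0.
Proof.
rewrite frobE => /nrm_eq0 H; apply/matrixP => i j; rewrite mxE.
exact: (H (i, j)).
Qed.

Lemma frob0 p q : frobnorm (0 : 'M[R]_(p, q)) = 0.
Proof. by rewrite -(scale0r 0) frobZ normr0 mul0r. Qed.

Lemma frobN p q (A : 'M[R]_(p, q)) : frobnorm (- A) = frobnorm A.
Proof. by rewrite -scaleN1r frobZ normrN normr1 mul1r. Qed.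

Lemma frob_mul p n q (A : 'M[R]_(p, n)) (B : 'M[R]_(n, q)) :
  frobnorm (A *m B) <= frobnorm A * frobnorm B.
Proof.
rewrite -(ler_pXn2r (_ : 0 < 2)%N) ?nnegrE ?mulr_ge0 ?frob_ge0 //.
rewrite exprMn !frob_sq (exchange_big _ _ _ _ _ (fun j k => B j k ^+ 2)) /=.
rewrite mulr_suml; apply: ler_sum => i _; rewrite mulr_sumr.
apply: ler_sum => k _; rewrite mxE; exact: cs_sq.
Qed.

Lemma vnorm2_frob q (x : 'cV[R]_q) : vnorm2 x = frobnorm x.
Proof.
by rewrite /vnorm2 /frobnorm; congr Num.sqrt; apply: eq_bigr => i _; rewrite big_ord1.
Qed.

Lemma frob_tr p q (A : 'M[R]_(p, q)) : frobnorm A^T = frobnorm A.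
Proof.
rewrite /frobnorm exchange_big; congr Num.sqrt.
by apply: eq_bigr => i _; apply: eq_bigr => j _; rewrite mxE.
Qed.

Lemma relu_sq (u v : R) : (relu u - relu v) ^+ 2 <= (u - v) ^+ 2.
Proof.
rewrite /relu !maxEle.
case: (leP 0 u) => hu; case: (leP 0 v) => hv.
- by [].
- rewrite subr0 -subr_ge0; have -> : (u - v) ^+ 2 - u ^+ 2 = v * (v - 2 * u) by ring.
  by rewrite nmulr_rge0 //; lra.
- rewrite sub0r sqrrN -subr_ge0; have -> : (u - v) ^+ 2 - v ^+ 2 = u * (u - 2 * v) by ring.
  by rewrite nmulr_rge0 //; lra.
- by rewrite subr0 expr0n /= sqr_ge0.
Qed.

Lemma relu_lip p q (P Q : 'M[R]_(p, q)) :
  frobnorm (relu_mx P - relu_mx Q) <= frobnorm (P - Q).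
Proof. by apply: frob_le => i j; rewrite !mxE relu_sq. Qed.

Lemma relu_mx0 p q : relu_mx (0 : 'M[R]_(p, q)) = 0.
Proof.
by apply/matrixP => i j; rewrite !mxE /relu maxxx.
Qed.

Definition sset p q (A : 'M[R]_(p, q)) :=
  [set r : R | exists x : 'cV[R]_q, vnorm2 x <= 1 /\ r = vnorm2 (A *m x)]%classic.

Lemma sset_ub p q (A : 'M[R]_(p, q)) : ubound (sset A) (frobnorm A).
Proof.
apply/ubP => r [x [x1 ->]]; rewrite vnorm2_frob.
apply: (le_trans (frob_mul _ _)); rewrite vnorm2_frob in x1.
by rewrite -{2}(mulr1 (frobnorm A)) ler_wpM2l // frob_ge0.
Qed.

Lemma sset0 p q (A : 'M[R]_(p, q)) : sset A 0.
Proof.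
exists 0; rewrite mulmx0 vnorm2_frob frob0; split => //; by rewrite vnorm2_frob frob0.
Qed.

Lemma spec_ge0 p q (A : 'M[R]_(p, q)) : 0 <= specnorm A.
Proof.
apply: (ub_le_sup _ (sset0 A)); exists (frobnorm A); exact: sset_ub.
Qed.

Lemma spec_le_frob p q (A : 'M[R]_(p, q)) : specnorm A <= frobnorm A.
Proof. apply: ge_sup; first by exists 0; exact: sset0. exact: sset_ub. Qed.

Lemma spec_bound p q (A : 'M[R]_(p, q)) (x : 'cV[R]_q) :
  frobnorm (A *m x) <= specnorm A * frobnorm x.
Proof.
have [x0|xp] := eqVneq (frobnorm x) 0.
  by rewrite (frob_eq0 x0) mulmx0 !frob0 mulr0.
have xpos : 0 < frobnorm x by rewrite lt_def xp frob_ge0.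
set y := (frobnorm x)^-1 *: x.
have fy : frobnorm y = 1.
  by rewrite frobZ ger0_norm ?invr_ge0 ?frob_ge0 // mulVf.
have : sset A (frobnorm (A *m y)).
  by exists y; rewrite !vnorm2_frob fy.
move=> /(ub_le_sup (ex_intro _ (frobnorm A) (@sset_ub _ _ A))).
rewrite -/(specnorm A) /y -scalemxAr frobZ ger0_norm ?invr_ge0 ?frob_ge0 //.
by rewrite ler_pdivrMl // mulrC.
Qed.

Lemma frob_mul_spec p n q (Z : 'M[R]_(p, n)) (A : 'M[R]_(n, q)) :
  frobnorm (Z *m A) <= frobnorm Z * specnorm A.
Proof.
have rowb : forall r : 'M[R]_(1, n), frobnorm (r *m A) <= frobnorm r * specnorm A.
  move=> r; set u := r *m A.
  have h1 : frobnorm u ^+ 2 <= frobnorm r * (specnorm A * frobnorm u).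
    have -> : frobnorm u ^+ 2 = (r *m (A *m u^T)) 0 0.
      rewrite mulmxA -/u frob_sq big_ord1 mxE; apply: eq_bigr => j _.
      by rewrite [u^T j 0]mxE expr2.
    apply: (le_trans (ler_norm _)); apply: (le_trans (frob_entry _ _ _)).
    apply: (le_trans (frob_mul _ _)); apply: ler_wpM2l; first exact: frob_ge0.
    by rewrite -(frob_tr u); exact: spec_bound.
  have [u0|up] := eqVneq (frobnorm u) 0.
    by rewrite u0 mulr_ge0 ?frob_ge0 ?spec_ge0.
  have upos : 0 < frobnorm u by rewrite lt_def up frob_ge0.
  by move: h1; rewrite mulrA expr2 ler_pM2r.
rewrite -(ler_pXn2r (_ : 0 < 2)%N) ?nnegrE ?mulr_ge0 ?frob_ge0 ?spec_ge0 //.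
have rsq : forall (M : 'M[R]_(p, _)) i, frobnorm (row i M) ^+ 2 = \sum_j M i j ^+ 2.
  by move=> k M i; rewrite frob_sq big_ord1; apply: eq_bigr => j _; rewrite mxE.
rewrite exprMn !frob_sq mulr_suml; apply: ler_sum => i _.
rewrite -(rsq _ (Z *m A) i) -(rsq _ Z i) row_mul -exprMn lerXn2r ?nnegrE ?mulr_ge0 ?frob_ge0 ?spec_ge0 //.
Qed.

End Frob.

Definition MT (R : realType) N m := matrix R N m.
HB.instance Definition _ (R : realType) N m := NormedModule.copy (MT R N m) (matrix R N m).
HB.instance Definition _ (R : realType) N m := Complete.copy (MT R N m) (matrix R N m).

Section Fix.
Local Open Scope classical_set_scope.
Variable R : realType.

Lemma pow_small (q c : R) : 0 <= q -> q < 1 -> 0 <= c -> exists k, q ^+ k * c < 1.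
Proof.
move=> q0 q1 c0.
have [->|qn0] := eqVneq q 0; first by exists 1%N; rewrite expr1 mul0r.
have qp : 0 < q by rewrite lt_def qn0 q0.
set h := q^-1 - 1.
have hp : 0 < h by rewrite /h subr_gt0 invf_gt1.
have bern : forall k, 1 + k%:R * h <= (1 + h) ^+ k.
  elim=> [|k IH]; first by rewrite mul0r addr0 expr0.
  rewrite exprS; apply: le_trans (ler_wpM2l _ IH); last by rewrite addr_ge0 // ltW.
  rewrite -natr1; have := ler0n R k; nra.
have c0h : 0 <= c / h by rewrite divr_ge0 // ltW.
exists (Num.Def.archi_bound (c / h)).
set k := Num.Def.archi_bound (c / h).
have kb : c / h < k%:R := archi_boundP c0h.
have e : 1 + h = q^-1 by rewrite /h addrC subrK.
have qk : q ^+ k = ((1 + h) ^+ k)^-1 by rewrite e exprVn invrK.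
rewrite qk mulrC ltr_pdivrMr; last by rewrite exprn_gt0 // e invr_gt0.
rewrite mul1r; apply: lt_le_trans (bern k).
move: kb; rewrite ltr_pdivrMr // => kb; lra.
Qed.

Lemma mxn_le_frob N m (x : 'M[R]_(N, m)) : mx_norm x <= frobnorm x.
Proof.
rewrite mx_normrE; apply: bigmax_le; first exact: frob_ge0.
by move=> [i j] _; exact: frob_entry.
Qed.

Lemma frob_le_mxn N m (x : 'M[R]_(N, m)) :
  frobnorm x <= mx_norm x * frobnorm (const_mx 1 : 'M[R]_(N, m)).
Proof.
have M0 : 0 <= mx_norm x by rewrite mx_normrE; elim/big_ind: _ => //= a b ha hb; rewrite le_max ha.
rewrite -[mx_norm x]ger0_norm // -frobZ; apply: frob_le => i j.
rewrite !mxE mulr1.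
have ent : `|x i j| <= mx_norm x.
  rewrite mx_normrE; exact: (le_bigmax _ (fun ij => `|x ij.1 ij.2|) (i, j)).
rewrite -[x i j ^+ 2]ger0_norm ?sqr_ge0 // normrX lerXn2r ?nnegrE //.
Qed.

Lemma exists_fix N m (f : 'M[R]_(N, m) -> 'M[R]_(N, m)) (q : R) :
  0 <= q -> q < 1 ->
  (forall x y, frobnorm (f x - f y) <= q * frobnorm (x - y)) -> exists p, f p = p.
Proof.
move=> q0 q1 Hf.
set c := frobnorm (const_mx 1 : 'M[R]_(N, m)).
have [k Hk] := pow_small q0 q1 (frob_ge0 (const_mx 1 : 'M[R]_(N, m))).
have iterL : forall n x y, frobnorm (iter n f x - iter n f y) <= q ^+ n * frobnorm (x - y).
  elim=> [|n IH] x y; first by rewrite expr0 mul1r.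
  rewrite !iterS; apply: le_trans (Hf _ _) _.
  by rewrite exprS -mulrA ler_wpM2l.
pose g : MT R N m -> MT R N m := iter k f.
have qc0 : 0 <= q ^+ k * c by rewrite mulr_ge0 ?exprn_ge0 ?frob_ge0.
have ctr : is_contraction (totalfun_ [set: MT R N m] g).
  exists (NngNum qc0); split => //=.
  move=> [x y] _ /=.
  rewrite /totalfun_ /g.
  apply: le_trans (mxn_le_frob _) _.
  apply: le_trans (iterL _ _ _) _.
  rewrite -mulrA ler_wpM2l ?exprn_ge0 // mulrC.
  exact: frob_le_mxn.
have [p _ gp] := banach_fixed_point ctr closedT (ex_intro _ 0 I).
exists p.
have gfp : f p = (totalfun_ [set: MT R N m] g) (f p).
  by rewrite /totalfun_ /g -iterSr iterS -gp.
exact: (contraction_fixpoint_unique ctr I I gfp gp).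
Qed.

End Fix.

Lemma contr_step (R : realType) (N d m : nat) (gamma : R) (X : 'M[R]_(N, d))
  (W : 'M[R]_(d, m)) (A : 'M[R]_m) (x y : 'M[R]_(N, m)) : 0 <= gamma ->
  frobnorm (relu_mx (gamma *: (x *m A) + relu_mx (X *m W)) -
            relu_mx (gamma *: (y *m A) + relu_mx (X *m W)))
  <= (gamma * specnorm A) * frobnorm (x - y).
Proof.
move=> g0; apply: le_trans (relu_lip _ _) _.
rewrite opprD addrACA subrr addr0 -scalerBr -mulmxBl frobZ ger0_norm //.
rewrite -mulrA ler_wpM2l // mulrC; exact: frob_mul_spec.
Qed.

Lemma sol_ex_unique (R : realType) (N d m : nat) (gamma : R) (X : 'M[R]_(N, d))
  (W : 'M[R]_(d, m)) (A : 'M[R]_m) : 0 <= gamma -> gamma * specnorm A < 1 ->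
  exists Z, is_eq_sol gamma X W A Z /\
     forall Z', is_eq_sol gamma X W A Z' -> Z' = Z.
Proof.
move=> g0 g1.
have q0 : 0 <= gamma * specnorm A by rewrite mulr_ge0 // spec_ge0.
have [Z HZ] := exists_fix q0 g1 (fun x y => contr_step X W A x y g0).
exists Z; split; first by rewrite /is_eq_sol HZ.
move=> Z' HZ'.
have H := contr_step X W A Z' Z g0.
rewrite -HZ' HZ in H.
apply/eqP; rewrite -subr_eq0; apply/eqP; apply: frob_eq0.
apply/eqP; rewrite eq_le frob_ge0 andbT.
have := frob_ge0 (Z' - Z); nra.
Qed.

Lemma frob_relu_le (R : realType) p q (P : 'M[R]_(p, q)) : frobnorm (relu_mx P) <= frobnorm P.
Proof. by have := relu_lip P 0; rewrite relu_mx0 !subr0. Qed.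

Theorem lemma4 (R : realType) (N d m : nat) (X : 'M[R]_(N, d))
    (Wa Wb : 'M[R]_(d, m)) (Aa Ab : 'M[R]_m) (gamma : R) :
  let lambda1 := Num.max (specnorm Wa) (specnorm Wb) in
  let lambda2 := Num.max (specnorm Aa) (specnorm Ab) in
  let gamma0 := gamma * lambda2 in
  0 < lambda2 -> 0 < gamma -> gamma0 < 1 ->
  (exists Za, is_eq_sol gamma X Wa Aa Za /\
     forall Z', is_eq_sol gamma X Wa Aa Z' -> Z' = Za) /\
  (exists Zb, is_eq_sol gamma X Wb Ab Zb /\
     forall Z', is_eq_sol gamma X Wb Ab Z' -> Z' = Zb) /\
  (forall Za Zb, is_eq_sol gamma X Wa Aa Za -> is_eq_sol gamma X Wb Ab Zb ->
     specnorm (Za - Zb) <=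
       frobnorm X / (1 - gamma0) *
       (gamma0 / (1 - gamma0) * (lambda1 / lambda2) * specnorm (Aa - Ab)
        + specnorm (Wa - Wb))).
Proof.
move=> l1 l2 g0 l2p gp g01.
have gge0 : 0 <= gamma by rewrite ltW.
have hAa : specnorm Aa <= l2 by rewrite /l2 le_max lexx.
have hAb : specnorm Ab <= l2 by rewrite /l2 le_max lexx orbT.
have hWb : specnorm Wb <= l1 by rewrite /l1 le_max lexx orbT.
have hWa : specnorm Wa <= l1 by rewrite /l1 le_max lexx.
have ga : gamma * specnorm Aa < 1 by apply: le_lt_trans g01; rewrite ler_wpM2l.
have gb : gamma * specnorm Ab < 1 by apply: le_lt_trans g01; rewrite ler_wpM2l.
split; first exact: sol_ex_unique.
split; first exact: sol_ex_unique.
move=> Za Zb HZa HZb.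
set fX := frobnorm X.
have fX0 : 0 <= fX by exact: frob_ge0.
have K0 : 0 < 1 - g0 by rewrite subr_gt0.
have hZb : frobnorm Zb <= g0 * frobnorm Zb + fX * l1.
  rewrite {1}HZb; apply: le_trans (frob_relu_le _) _.
  apply: le_trans (frobD _ _) _; apply: lerD.
    rewrite frobZ ger0_norm // /g0 -mulrA ler_wpM2l // mulrC.
    apply: le_trans (frob_mul_spec _ _) _.
    by apply: (le_trans (ler_wpM2l (frob_ge0 Zb) hAb)); rewrite mulrC.
  apply: le_trans (frob_relu_le _) _; apply: le_trans (frob_mul_spec _ _) _.
  by rewrite ler_wpM2l.
have fZb0 := frob_ge0 Zb.
have hZb' : frobnorm Zb <= fX * l1 / (1 - g0).
  by rewrite ler_pdivlMr //; lra.
set D := Za - Zb.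
have eqPP : (gamma *: (Za *m Aa) + relu_mx (X *m Wa)) - (gamma *: (Zb *m Ab) + relu_mx (X *m Wb))
   = gamma *: (D *m Aa) + gamma *: (Zb *m (Aa - Ab)) + (relu_mx (X *m Wa) - relu_mx (X *m Wb)).
  rewrite /D mulmxBl mulmxBr !scalerBr.
  rewrite addrA (addrA (gamma *: (Za *m Aa) - gamma *: (Zb *m Aa))) subrK.
  by rewrite opprD addrACA addrA.
have hD : frobnorm D <= gamma * (frobnorm D * l2 + frobnorm Zb * specnorm (Aa - Ab))
                        + fX * specnorm (Wa - Wb).
  rewrite {1}/D {1}HZa {1}HZb; apply: le_trans (relu_lip _ _) _.
  rewrite eqPP; apply: le_trans (frobD _ _) _; apply: lerD.
    apply: le_trans (frobD _ _) _; rewrite !frobZ ger0_norm // -mulrDr ler_wpM2l //.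
    apply: lerD; last exact: frob_mul_spec.
    apply: le_trans (frob_mul_spec _ _) _; by rewrite ler_wpM2l ?frob_ge0.
  apply: le_trans (relu_lip _ _) _; rewrite -mulmxBr; exact: frob_mul_spec.
have sA0 := spec_ge0 (Aa - Ab).
have sW0 := spec_ge0 (Wa - Wb).
have fD0 := frob_ge0 D.
have hZbs : frobnorm Zb * specnorm (Aa - Ab) <= fX * l1 / (1 - g0) * specnorm (Aa - Ab).
  by rewrite ler_wpM2r.
have hD' : frobnorm D * (1 - g0) <=
   gamma * (fX * l1 / (1 - g0) * specnorm (Aa - Ab)) + fX * specnorm (Wa - Wb).
  have e : gamma * (frobnorm D * l2) = g0 * frobnorm D by rewrite /g0; ring.
  move: hD; rewrite mulrDr e => hD.
  have := ler_wpM2l gge0 hZbs; lra.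
have -> : fX / (1 - g0) *
    (g0 / (1 - g0) * (l1 / l2) * specnorm (Aa - Ab) + specnorm (Wa - Wb)) =
   (gamma * (fX * l1 / (1 - g0) * specnorm (Aa - Ab)) + fX * specnorm (Wa - Wb)) / (1 - g0).
  rewrite /g0; field.
  by apply/andP; split; rewrite gt_eqF // -/g0.
apply: le_trans (spec_le_frob _) _.
by rewrite ler_pdivlMr.
Qed.
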